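(* For every integer $N\ge16$ there is $C<\infty$ such that: (a) for every interval $Q$, $\int_Q M(\mathbf 1_Q\widehat{\dot\sigma})^2\,d\widehat\omega\le C\,\widehat{\dot\sigma}(Q)$, where $M\mu(x)=\sup_{J\ni x}\mu(J)/|J|$ (sup over intervals $J$ containing $x$); and (b) for every interval $I_0$ and every decomposition $I_0=\bigcup_{r\ge1}I_r$ into pairwise disjoint intervals, $\sum_{r\ge1}\widehat\omega(I_r)\,\mathrm P(I_r,\mathbf 1_{I_0}\widehat{\dot\sigma})^2\le C\,\widehat{\dot\sigma}(I_0)$.
   Context: $\mathrm P(I,\mu)=\int_{\mathbb R}\frac{|I|}{(|I|+\operatorname{dist}(x,I))^2}\,d\mu(x)$. Cantor intervals: fix an integer $N\ge16$. Set $I^0_1=[0,1]$. Each interval $I=[a,a+N^{-k}]$ of generation $k$ has two children of generation $k+1$: the left child $I_-=[a,a+N^{-k-1}]$ and the right child $I_+=[a+N^{-k}-N^{-k-1},a+N^{-k}]$. The $2^k$ intervals of generation $k$ are denoted $I^k_j$, $1\le j\le 2^k$, numbered left to right; $\mathcal D$ is the collection of all of them. $\dot z^k_j$ is the center of $I^k_j$. The Cantor set is $\mathsf E^{(N)}=\bigcap_{k}\bigcup_{j}I^k_j$. Redistributed Cantor measure: with $\eta=1/N$, $\widehat\omega$ is the unique Borel probability measure supported on $\mathsf E^{(N)}$ such that $\widehat\omega(I^1_1)=\widehat\omega(I^1_2)=\frac12$ and for every $I\in\mathcal D$ of generation $\ge1$: if $I$ is the left child of its parent then $\widehat\omega(I_-)=\frac{1+\eta}2\widehat\omega(I)$,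 $\widehat\omega(I_+)=\frac{1-\eta}2\widehat\omega(I)$; if $I$ is the right child of its parent then $\widehat\omega(I_-)=\frac{1-\eta}2\widehat\omega(I)$, $\widehat\omega(I_+)=\frac{1+\eta}2\widehat\omega(I)$. Weights: $\widehat s^k_j=N^{-2k}/\widehat\omega(I^k_j)$; $\widehat{\dot\sigma}=\sum_{k\ge0}\sum_{j=1}^{2^k}\widehat s^k_j\,\delta_{\dot z^k_j}$. *)

(* Defs.v *)
From Stdlib Require Import Reals Lra List Classical ClassicalEpsilon.
Import ListNotations.
Open Scope R_scope.

Definition ind (P : Prop) : R :=
  if excluded_middle_informative P then 1 else 0.

Definition lsum {A : Type} (f : A -> R) (l : list A) : R :=
  fold_right (fun a acc => f a + acc) 0 l.

Record interval := mkInterval {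
  lo : R; hi : R; lo_closed : bool; hi_closed : bool }.

Definition in_ival (I : interval) (x : R) : Prop :=
  (if lo_closed I then lo I <= x else lo I < x) /\
  (if hi_closed I then x <= hi I else x < hi I).

Definition nondeg (I : interval) : Prop := lo I < hi I.

Definition len (I : interval) : R := hi I - lo I.

Definition dist_int (x : R) (I : interval) : R :=
  if Rlt_dec x (lo I) then lo I - x
  else if Rlt_dec (hi I) x then x - hi I else 0.

(** Cantor intervals are indexed by words w : list bool (true = right child),
    read from the root; generation = length w. *)
Fixpoint words (k : nat) : list (list bool) :=
  match k with
  | O => [ [] ]
  | S k' => flat_map (fun w => [false :: w; true :: w]) (words k')
  end.

(** left endpoint of I_w, where d is the generation of the current parent *)
Fixpoint lep (N : nat) (d : nat) (w : list bool) : R :=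
  match w with
  | [] => 0
  | b :: w' => (if b then (/ INR N) ^ d - (/ INR N) ^ (S d) else 0) + lep N (S d) w'
  end.

Definition cleft (N : nat) (w : list bool) : R := lep N 0 w.
Definition clen (N : nat) (w : list bool) : R := (/ INR N) ^ (length w).

Definition in_cantor (N : nat) (w : list bool) (x : R) : Prop :=
  cleft N w <= x <= cleft N w + clen N w.

Definition center (N : nat) (w : list bool) : R := cleft N w + clen N w / 2.

Definition in_E (N : nat) (x : R) : Prop :=
  forall k : nat, exists w, length w = k /\ in_cantor N w x.

(** redistributed Cantor measure of I_w; prev = last bit of the parent word *)
Definition ofactor (N : nat) (prev : option bool) (b : bool) : R :=
  match prev with
  | None => / 2
  | Some p => if Bool.eqb p b then (1 + / INR N) / 2 else (1 - / INR N) / 2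
  end.

Fixpoint om (N : nat) (prev : option bool) (w : list bool) : R :=
  match w with
  | [] => 1
  | b :: w' => ofactor N prev b * om N (Some b) w'
  end.

Definition omega_hat (N : nat) (w : list bool) : R := om N None w.

Definition sweight (N : nat) (w : list bool) : R :=
  (/ INR N) ^ (2 * length w) / omega_hat N w.

(** Partial sums of sigma_hat(A) over generations <= K. *)
Definition sigma_part (N : nat) (K : nat) (A : R -> Prop) : R :=
  lsum (fun k => lsum (fun w => sweight N w * ind (A (center N w))) (words k))
       (seq 0 (S K)).

(** S is an upper bound of sigma_hat(A) (which may a priori be +infinity). *)
Definition sigma_le (N : nat) (A : R -> Prop) (S : R) : Prop :=
  forall K, sigma_part N K A <= S.

(** c <= (M (1_Q sigma_hat)(x))^2 * 1_Q(x), where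
    M mu(x) = sup_{J interval containing x} mu(J)/|J|. *)
Definition below_max_sq (N : nat) (Q : interval) (x c : R) : Prop :=
  c <= 0 \/
  (in_ival Q x /\
   forall t, 0 <= t -> t * t < c ->
     exists J : interval, nondeg J /\ in_ival J x /\
       exists K, t * len J < sigma_part N K (fun y => in_ival Q y /\ in_ival J y)).

(** Lower approximation at generation k of omega_hat(J) (inner approximation). *)
Definition omega_low (N : nat) (k : nat) (J : interval) : R :=
  lsum (fun w => omega_hat N w * ind (forall x, in_cantor N w x -> in_ival J x))
       (words k).

(** Partial sums (generations <= K) of P(I, 1_{I0} sigma_hat). *)
Definition poisson_part (N : nat) (K : nat) (I I0 : interval) : R :=
  lsum (fun k => lsum (fun w =>
     sweight N w * ind (in_ival I0 (center N w)) *
       (len I / (len I + dist_int (center N w) I) ^ 2)) (words k))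
    (seq 0 (S K)).

(** I0 is the disjoint union of the nonempty nondegenerate intervals Ir r
    (None = unused index, allowing finite decompositions). *)
Definition decomposition (I0 : interval) (Ir : nat -> option interval) : Prop :=
  (forall r I, Ir r = Some I -> nondeg I) /\
  (forall x, in_ival I0 x <-> exists r I, Ir r = Some I /\ in_ival I x) /\
  (forall r r' I I', r <> r' -> Ir r = Some I -> Ir r' = Some I' ->
     forall x, in_ival I x -> in_ival I' x -> False).

Definition packing_term (N : nat) (k K : nat) (I0 : interval) (o : option interval) : R :=
  match o with
  | None => 0
  | Some J => omega_low N k J * (poisson_part N K J I0) ^ 2
  end.

(* Main.v *)
Require Import Defs.
From Stdlib Require Import Reals List.
From Stdlib Require Import Lra Lia Classical ClassicalEpsilon Arith.
Import ListNotations.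
Require Import Defs.
Open Scope R_scope.

Lemma lsum_nil {A} (f : A -> R) : lsum f [] = 0.
Proof. reflexivity. Qed.
Lemma lsum_cons {A} (f : A -> R) a l : lsum f (a :: l) = f a + lsum f l.
Proof. reflexivity. Qed.
Lemma lsum_app {A} (f : A -> R) l1 l2 : lsum f (l1 ++ l2) = lsum f l1 + lsum f l2.
Proof. induction l1; simpl; [lra|]. unfold lsum in *; simpl in *. rewrite IHl1; lra. Qed.
Lemma lsum_le {A} (f g : A -> R) l : (forall x, In x l -> f x <= g x) -> lsum f l <= lsum g l.
Proof. induction l; intros H; unfold lsum in *; simpl in *; [lra|].
  pose proof (H a (or_introl eq_refl)). pose proof (IHl (fun x h => H x (or_intror h))). lra. Qed.
Lemma lsum_ext {A} (f g : A -> R) l : (forall x, In x l -> f x = g x) -> lsum f l = lsum g l.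
Proof. induction l; intros H; [reflexivity|]. unfold lsum in *; simpl in *.
  rewrite (H a (or_introl eq_refl)). rewrite (IHl (fun x h => H x (or_intror h))). lra. Qed.
Lemma lsum_zero {A} (l : list A) : lsum (fun _ => 0) l = 0.
Proof. induction l; [reflexivity|]. rewrite lsum_cons, IHl; lra. Qed.
Lemma lsum_nonneg {A} (f : A -> R) l : (forall x, In x l -> 0 <= f x) -> 0 <= lsum f l.
Proof. intros H. pose proof (lsum_le (fun _ => 0) f l H).
  rewrite lsum_zero in *. lra. Qed.
Lemma lsum_nonpos {A} (f : A -> R) l : (forall x, In x l -> f x <= 0) -> lsum f l <= 0.
Proof. intros H. pose proof (lsum_le f (fun _ => 0) l H).
  rewrite lsum_zero in *. lra. Qed.
Lemma lsum_plus {A} (f g : A -> R) l : lsum (fun x => f x + g x) l = lsum f l + lsum g l.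
Proof. induction l; unfold lsum in *; simpl in *; lra. Qed.
Lemma lsum_scal {A} (c : R) (f : A -> R) l : lsum (fun x => c * f x) l = c * lsum f l.
Proof. induction l; unfold lsum in *; simpl in *; [lra|]. rewrite IHl; ring. Qed.
Lemma lsum_swap {A B} (f : A -> B -> R) l1 l2 :
  lsum (fun a => lsum (fun b => f a b) l2) l1 = lsum (fun b => lsum (fun a => f a b) l1) l2.
Proof. induction l1.
  - symmetry. change (lsum (fun _ : B => 0) l2 = 0). apply lsum_zero.
  - rewrite lsum_cons, IHl1. rewrite <- lsum_plus. apply lsum_ext. intros; rewrite lsum_cons; reflexivity. Qed.
Lemma lsum_in_ge {A} (f : A -> R) l a : In a l -> (forall x, In x l -> 0 <= f x) -> f a <= lsum f l.
Proof. induction l; intros Hin H; [contradiction|]. rewrite lsum_cons. simpl in Hin.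
  destruct Hin as [<-|Hin].
  - pose proof (lsum_nonneg f l (fun x h => H x (or_intror h))). lra.
  - pose proof (H a0 (or_introl eq_refl)). pose proof (IHl Hin (fun x h => H x (or_intror h))). lra. Qed.
Lemma lsum_pos_exists {A} (f : A -> R) l : 0 < lsum f l -> exists a, In a l /\ 0 < f a.
Proof. intros H. apply NNPP; intro Hn.
  assert (lsum f l <= 0). { apply lsum_nonpos. intros x Hx. apply Rnot_lt_le. intro; apply Hn; eauto. } lra. Qed.
Lemma lsum_flat_map {A B} (f : B -> R) (g : A -> list B) l :
  lsum f (flat_map g l) = lsum (fun a => lsum f (g a)) l.
Proof. induction l; [reflexivity|]. simpl flat_map. rewrite lsum_app, lsum_cons, IHl. reflexivity. Qed.

Lemma ind_true (P0 : Prop) : P0 -> ind P0 = 1.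
Proof. unfold ind; destruct excluded_middle_informative; tauto. Qed.
Lemma ind_false (P0 : Prop) : ~ P0 -> ind P0 = 0.
Proof. unfold ind; destruct excluded_middle_informative; tauto. Qed.
Lemma ind_iff (P0 Q0 : Prop) : (P0 <-> Q0) -> ind P0 = ind Q0.
Proof. intros H; unfold ind; do 2 destruct excluded_middle_informative; tauto. Qed.
Lemma ind_01 (P0 : Prop) : 0 <= ind P0 <= 1.
Proof. unfold ind; destruct excluded_middle_informative; lra. Qed.
Lemma ind_cases (P0 : Prop) : (P0 /\ ind P0 = 1) \/ (~P0 /\ ind P0 = 0).
Proof. unfold ind; destruct excluded_middle_informative; tauto. Qed.

Lemma words_length k w : In w (words k) -> length w = k.
Proof. revert w; induction k; simpl; intros w H.
  - destruct H as [<-|[]]; reflexivity.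
  - apply in_flat_map in H. destruct H as [w' [H1 H2]].
    simpl in H2; destruct H2 as [<-|[<-|[]]]; simpl; f_equal; auto. Qed.
Lemma words_complete w : In w (words (length w)).
Proof. induction w as [|b w IH]; simpl; [auto|]. apply in_flat_map. exists w; split; auto.
  destruct b; simpl; auto. Qed.
Lemma lsum_words_S (f : list bool -> R) k :
  lsum f (words (S k)) = lsum (fun w => f (false :: w) + f (true :: w)) (words k).
Proof. simpl. rewrite lsum_flat_map. apply lsum_ext. intros. unfold lsum; simpl; lra. Qed.

Definition prefix (v w : list bool) : Prop := exists u, w = v ++ u.

Lemma prefix_cons b v c w : prefix (b :: v) (c :: w) <-> b = c /\ prefix v w.
Proof. unfold prefix; split.
  - intros [u Hu]; simpl in Hu; inversion Hu; subst; eauto.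
  - intros [-> [u ->]]; exists u; reflexivity. Qed.

Lemma lsum_words_prefix v : forall (f : list bool -> R) m,
  lsum (fun w => f w * ind (prefix v w)) (words (length v + m)) = lsum (fun u => f (v ++ u)) (words m).
Proof. induction v as [|b v IH]; intros f m.
  - apply lsum_ext. intros. rewrite ind_true; [simpl; ring|]. exists x; reflexivity.
  - change (length (b :: v) + m)%nat with (S (length v + m)).
    rewrite lsum_words_S. rewrite <- (IH (fun w => f (b :: w))). apply lsum_ext. intros w _.
    rewrite (ind_iff (prefix (b :: v) (false :: w)) (b = false /\ prefix v w)) by apply prefix_cons.
    rewrite (ind_iff (prefix (b :: v) (true :: w)) (b = true /\ prefix v w)) by apply prefix_cons.
    destruct b.
    + rewrite (ind_false (true = false /\ _)) by (intros [H _]; discriminate).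
      rewrite (ind_iff (true = true /\ _) (prefix v w)) by tauto. ring.
    + rewrite (ind_false (false = true /\ _)) by (intros [H _]; discriminate).
      rewrite (ind_iff (false = false /\ _) (prefix v w)) by tauto. ring. Qed.

Lemma lsum_words_prefix_small v k (f : list bool -> R) : (k < length v)%nat ->
  lsum (fun w => f w * ind (prefix v w)) (words k) = 0.
Proof. intros Hk. transitivity (lsum (fun _ : list bool => 0) (words k)).
  - apply lsum_ext. intros w Hw. rewrite ind_false; [ring|]. intros [u ->].
    apply words_length in Hw. rewrite length_app in Hw. lia.
  - apply lsum_zero. Qed.

Lemma div_nonneg a b : 0 <= a -> 0 < b -> 0 <= a / b.
Proof. intros. unfold Rdiv. apply Rmult_le_pos; [auto|]. left; apply Rinv_0_lt_compat; auto. Qed.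

Lemma q_facts N : (16 <= N)%nat -> 0 < / INR N /\ / INR N <= 1/16.
Proof. intros H. apply le_INR in H. simpl in H. replace (INR 16) with 16 in H by (simpl; ring).
  split. apply Rinv_0_lt_compat; lra. unfold Rdiv. rewrite Rmult_1_l. apply Rinv_le_contravar; lra. Qed.

Lemma ofactor_bounds N p b : (16 <= N)%nat -> (1 - / INR N) / 2 <= ofactor N p b.
Proof. intros H; destruct (q_facts N H). destruct p as [p|]; simpl; [|lra].
  destruct (Bool.eqb p b); lra. Qed.

Lemma ofactor_pos N p b : (16 <= N)%nat -> 0 < ofactor N p b.
Proof. intros H; pose proof (ofactor_bounds N p b H); destruct (q_facts N H); lra. Qed.

Lemma om_pos N : (16 <= N)%nat -> forall w p, 0 < om N p w.
Proof. intros H w; induction w; intros p; simpl; [lra|].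
  apply Rmult_lt_0_compat; [apply ofactor_pos; auto| auto]. Qed.

Fixpoint lastb (p : option bool) (w : list bool) : option bool :=
  match w with [] => p | b :: w' => lastb (Some b) w' end.

Lemma om_app N v : forall p u, om N p (v ++ u) = om N p v * om N (lastb p v) u.
Proof. induction v; intros p u; simpl; [ring|]. rewrite IHv; ring. Qed.

Lemma om_sum N : forall m p, lsum (om N p) (words m) = 1.
Proof. induction m; intros p.
  - unfold lsum; simpl; ring.
  - rewrite lsum_words_S. simpl.
    transitivity (ofactor N p false * lsum (om N (Some false)) (words m) + ofactor N p true * lsum (om N (Some true)) (words m)).
    + rewrite <- !lsum_scal, <- lsum_plus. apply lsum_ext; intros; reflexivity.
    + rewrite !IHm. destruct p as [p|]; simpl; [|lra]. destruct p; simpl; lra. Qed.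

Lemma inv_om_sum N : (16 <= N)%nat -> forall m p,
  lsum (fun u => (/ INR N) ^ m / om N p u) (words m) <= (4/15) ^ m.
Proof. intros HN. destruct (q_facts N HN) as [q0 q1]. induction m; intros p.
  - unfold lsum; simpl. lra.
  - rewrite lsum_words_S.
    set (q := / INR N) in *.
    assert (Hb : forall b, / ofactor N p b <= 2 / (1 - q)).
    { intros b. pose proof (ofactor_bounds N p b HN). pose proof (ofactor_pos N p b HN).
      fold q in H. replace (2 / (1 - q)) with (/ ((1 - q)/2)) by (field; lra).
      apply Rinv_le_contravar; lra. }
    apply Rle_trans with (lsum (fun w => (q * (2 / (1-q))) * (q ^ m / om N (Some false) w) +
                                      (q * (2 / (1-q))) * (q ^ m / om N (Some true) w)) (words m)).
    + apply lsum_le. intros w _. simpl.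
      pose proof (om_pos N HN w (Some false)). pose proof (om_pos N HN w (Some true)).
      pose proof (ofactor_pos N p false HN). pose proof (ofactor_pos N p true HN).
      assert (0 <= q ^ m) by (apply pow_le; lra).
      assert (E : forall b, q * q ^ m / (ofactor N p b * om N (Some b) w) = q * / ofactor N p b * (q ^ m / om N (Some b) w)).
      { intros b. pose proof (om_pos N HN w (Some b)). pose proof (ofactor_pos N p b HN). field. lra. }
      rewrite !E.
      assert (forall b, 0 <= q ^ m / om N (Some b) w).
      { intros b. pose proof (om_pos N HN w (Some b)). apply div_nonneg; lra. }
      pose proof (Hb false); pose proof (Hb true); pose proof (H4 false); pose proof (H4 true).
      apply Rplus_le_compat; apply Rmult_le_compat_r; auto; apply Rmult_le_compat_l; lra.
    + rewrite lsum_plus, !lsum_scal. pose proof (IHm (Some false)). pose proof (IHm (Some true)).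
      assert (0 <= q * (2 / (1 - q)) <= 2/15).
      { split. apply Rmult_le_pos; [lra|]. apply div_nonneg; lra.
        apply Rle_trans with (q * (2 / (15/16))). apply Rmult_le_compat_l; [lra|].
        unfold Rdiv. apply Rmult_le_compat_l; [lra|]. apply Rinv_le_contravar; lra.
        lra. }
      simpl. assert (0 <= (4/15)^m) by (apply pow_le; lra). nra. Qed.

Lemma my_pow_le1 q n : 0 <= q <= 1 -> q ^ n <= 1.
Proof. intros Hq; induction n; simpl; [lra|]. assert (0 <= q ^ n) by (apply pow_le; lra). nra. Qed.

Lemma pow_anti q : 0 <= q <= 1 -> forall m n, (m <= n)%nat -> q ^ n <= q ^ m.
Proof. intros Hq m n H. replace n with (m + (n - m))%nat by lia. rewrite pow_add.
  assert (0 <= q ^ m) by (apply pow_le; lra). assert (q ^ (n - m) <= 1) by (apply my_pow_le1; lra).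
  assert (0 <= q ^ (n - m)) by (apply pow_le; lra). nra. Qed.

Lemma lep_app N d w u : lep N d (w ++ u) = lep N d w + lep N (d + length w) u.
Proof. revert d; induction w; intros d; simpl.
  - rewrite Nat.add_0_r; ring.
  - rewrite IHw. rewrite Nat.add_succ_r. simpl. destruct a; ring. Qed.

Lemma lep_bounds N : (16 <= N)%nat -> forall u d,
  0 <= lep N d u <= (/ INR N) ^ d - (/ INR N) ^ (d + length u).
Proof. intros HN. destruct (q_facts N HN). set (q := / INR N) in *.
  induction u; intros d; simpl.
  - rewrite Nat.add_0_r; lra.
  - fold q. destruct (IHu (S d)) as [h1 h2]. rewrite Nat.add_succ_r.
    assert (q ^ (S d) <= q ^ d) by (apply pow_anti; [lra|lia]).
    simpl in *. destruct a; lra. Qed.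

Lemma nesting N : (16 <= N)%nat -> forall w u x, in_cantor N (w ++ u) x -> in_cantor N w x.
Proof. intros HN w u x. unfold in_cantor, cleft, clen. rewrite lep_app, length_app. simpl.
  destruct (lep_bounds N HN u (length w)). lra. Qed.

Lemma cleft_child N w b : cleft N (w ++ [b]) =
  cleft N w + (if b then (/ INR N) ^ (length w) - (/ INR N) ^ (S (length w)) else 0).
Proof. unfold cleft. rewrite lep_app. simpl. ring. Qed.

Lemma child_bounds N : (16 <= N)%nat -> forall w b u x, in_cantor N (w ++ b :: u) x ->
  if b then cleft N w + (/ INR N) ^ (length w) - (/ INR N) ^ (S (length w)) <= x <= cleft N w + (/ INR N) ^ (length w)
  else cleft N w <= x <= cleft N w + (/ INR N) ^ (S (length w)).
Proof. intros HN w b u x H. replace (w ++ b :: u) with ((w ++ [b]) ++ u) in H by (rewrite <- app_assoc; reflexivity).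
  apply nesting in H; auto. unfold in_cantor in H. rewrite cleft_child in H.
  unfold clen in H. rewrite length_app in H. simpl in H. rewrite Nat.add_1_r in H. simpl in H.
  destruct b; simpl; lra. Qed.

Lemma sep N : (16 <= N)%nat -> forall p c a b x y,
  in_cantor N (p ++ c :: a) x -> in_cantor N (p ++ negb c :: b) y ->
  let z := center N p in let g := 7/16 * (/ INR N) ^ (length p) in
  (c = false /\ x + g <= z /\ z + g <= y) \/ (c = true /\ y + g <= z /\ z + g <= x).
Proof. intros HN p c a b x y Hx Hy z g. destruct (q_facts N HN).
  pose proof (child_bounds N HN p c a x Hx) as Bx. pose proof (child_bounds N HN p (negb c) b y Hy) as By.
  unfold z, g, center, clen. set (q := / INR N) in *. set (k := length p) in *.
  assert (0 < q ^ k) by (apply pow_lt; lra). simpl in Bx, By. fold q in Bx, By.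
  assert (q * q ^ k <= /16 * q ^ k) by nra.
  destruct c; simpl in *; [right|left]; repeat split; auto; lra. Qed.

Lemma cleft_in N : (16 <= N)%nat -> forall w, in_cantor N w (cleft N w).
Proof. intros HN w. unfold in_cantor, clen. destruct (q_facts N HN). assert (0 < (/ INR N) ^ length w) by (apply pow_lt; lra). lra. Qed.

Lemma center_in N : (16 <= N)%nat -> forall w, in_cantor N w (center N w).
Proof. intros HN w. unfold in_cantor, center, clen. destruct (q_facts N HN). assert (0 < (/ INR N) ^ length w) by (apply pow_lt; lra). lra. Qed.

Lemma lep_falses N n d : lep N d (repeat false n) = 0.
Proof. revert d; induction n; intros d; simpl; [reflexivity|]. rewrite IHn; ring. Qed.

Lemma in_E_cleft N : (16 <= N)%nat -> forall w, in_E N (cleft N w).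
Proof. intros HN w k. set (W := w ++ repeat false k).
  assert (HW : cleft N W = cleft N w) by (unfold W, cleft; rewrite lep_app, lep_falses; ring).
  exists (firstn k W). split.
  - apply firstn_length_le. unfold W. rewrite length_app, repeat_length. lia.
  - apply (nesting N HN _ (skipn k W)). rewrite firstn_skipn. rewrite <- HW. apply cleft_in; auto. Qed.

Lemma common_prefix : forall w1 w2 : list bool, length w1 = length w2 -> w1 <> w2 ->
  exists p a b c, w1 = p ++ c :: a /\ w2 = p ++ negb c :: b.
Proof. induction w1 as [|x w1 IH]; intros [|y w2] Hl Hn; simpl in Hl; try discriminate.
  - exfalso; auto.
  - destruct (Bool.bool_dec x y) as [<-|Hxy].
    + destruct (IH w2) as [p [a [b [c [H1 H2]]]]]; [lia| congruence |].
      exists (x :: p), a, b, c. rewrite H1, H2. split; reflexivity.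
    + exists [], w1, w2, x. simpl. split; [reflexivity|]. destruct x, y; simpl; congruence. Qed.

Lemma common_prefix_len : forall (w1 w2 p a b : list bool) c, w1 = p ++ c :: a -> (length p < length w1)%nat.
Proof. intros. subst. rewrite length_app. simpl. lia. Qed.

Lemma dist_E_center N : (16 <= N)%nat -> forall x u, in_E N x ->
  x + (/ INR N) ^ (length u) / 4 <= center N u \/ center N u + (/ INR N) ^ (length u) / 4 <= x.
Proof. intros HN x u HE. destruct (q_facts N HN). set (q := / INR N) in *.
  destruct (HE (S (length u))) as [w' [Hl Hx]].
  pose proof (firstn_skipn (length u) w') as Hsp.
  assert (Hl1 : length (firstn (length u) w') = length u) by (apply firstn_length_le; lia).
  destruct (list_eq_dec Bool.bool_dec (firstn (length u) w') u) as [Heq|Hne].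
  - assert (length (skipn (length u) w') = 1%nat) by (rewrite length_skipn; lia).
    destruct (skipn (length u) w') as [|b [|]] eqn:Es; simpl in H1; try lia.
    rewrite <- Hsp, Heq in Hx. pose proof (child_bounds N HN u b [] x Hx) as B.
    unfold center, clen. fold q in B |- *. assert (0 < q ^ length u) by (apply pow_lt; lra).
    simpl in B. fold q in B. assert (q * q ^ length u <= /16 * q ^ length u) by nra.
    destruct b; lra.
  - destruct (common_prefix _ _ Hl1 Hne) as [p [a [b [c [H1 H2]]]]].
    assert (Hp : (length p < length u)%nat) by (apply (common_prefix_len u u p b b (negb c)); auto).
    rewrite <- Hsp in Hx. apply nesting in Hx; auto. rewrite H1 in Hx.
    pose proof (center_in N HN u) as Hc. rewrite H2 in Hc.
    pose proof (sep N HN p c a b x _ Hx Hc) as S. simpl in S.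
    assert (q ^ length u <= q ^ length p) by (apply pow_anti; [lra|lia]).
    assert (0 < q ^ length u) by (apply pow_lt; lra).
    fold q in S. rewrite <- H2 in S. destruct S as [[_ [S1 S2]]|[_ [S1 S2]]]; lra. Qed.

Lemma in_ival_convex Q x y z : in_ival Q x -> in_ival Q y -> x <= z <= y -> in_ival Q z.
Proof. unfold in_ival. destruct (lo_closed Q), (hi_closed Q); intros; lra. Qed.

Lemma in_ival_le Q x : in_ival Q x -> lo Q <= x <= hi Q.
Proof. unfold in_ival. destruct (lo_closed Q), (hi_closed Q); intros; lra. Qed.

Lemma between_center N : (16 <= N)%nat -> forall v u, (length v <= length u)%nat ->
  firstn (length v) u <> v -> exists p, (length p < length v)%nat /\
  (center N v <= center N p <= center N u \/ center N u <= center N p <= center N v).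
Proof. intros HN v u Hl Hne.
  assert (Hl1 : length (firstn (length v) u) = length v) by (apply firstn_length_le; lia).
  destruct (common_prefix _ _ Hl1 Hne) as [p [a [b [c [H1 H2]]]]].
  exists p. split. { apply (common_prefix_len v v p b b (negb c)); auto. }
  pose proof (center_in N HN u) as Hu. set (cu := center N u) in Hu |- *. rewrite <- (firstn_skipn (length v) u) in Hu.
  apply nesting in Hu; auto. rewrite H1 in Hu.
  pose proof (center_in N HN v) as Hv. rewrite H2 in Hv.
  pose proof (sep N HN p c a b _ _ Hu Hv) as S. simpl in S.
  assert (0 < (/ INR N) ^ length p) by (apply pow_lt; destruct (q_facts N HN); lra).
  rewrite <- H2 in S. destruct S as [[_ [S1 S2]]|[_ [S1 S2]]]; lra. Qed.

Lemma uniq_center N : (16 <= N)%nat -> forall (Q : interval) v,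
  in_ival Q (center N v) ->
  (forall u, in_ival Q (center N u) -> (length v <= length u)%nat) ->
  forall u, in_ival Q (center N u) -> prefix v u.
Proof. intros HN Q v Hv Hmin u Hu. pose proof (Hmin u Hu) as Hl.
  destruct (list_eq_dec Bool.bool_dec (firstn (length v) u) v) as [Heq|Hne].
  - exists (skipn (length v) u). rewrite <- Heq at 1. symmetry; apply firstn_skipn.
  - destruct (between_center N HN v u Hl Hne) as [p [Hp Hb]].
    assert (in_ival Q (center N p)).
    { destruct Hb; [apply (in_ival_convex Q (center N v) (center N u)) | apply (in_ival_convex Q (center N u) (center N v))]; auto. }
    specialize (Hmin p H). lia. Qed.

Lemma omega_pos N : (16 <= N)%nat -> forall w, 0 < omega_hat N w.
Proof. intros; apply om_pos; auto. Qed.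

Lemma omega_prefix_sum N : (16 <= N)%nat -> forall v k,
  lsum (fun w => omega_hat N w * ind (prefix v w)) (words k) <= omega_hat N v.
Proof. intros HN v k. pose proof (omega_pos N HN v).
  destruct (Nat.lt_ge_cases k (length v)) as [Hk|Hk].
  - rewrite lsum_words_prefix_small; auto. lra.
  - replace k with (length v + (k - length v))%nat by lia. rewrite lsum_words_prefix.
    unfold omega_hat. apply Rle_trans with (lsum (fun u => om N None v * om N (lastb None v) u) (words (k - length v))).
    + apply Req_le, lsum_ext; intros; apply om_app.
    + rewrite lsum_scal, om_sum. lra. Qed.

Definition Aof N v := (/ INR N) ^ (length v) / omega_hat N v.

Definition gfun N v k := lsum (fun u => (/ INR N) ^ k / omega_hat N u * ind (prefix v u)) (words k).

Lemma gfun_small N v k : (k < length v)%nat -> gfun N v k = 0.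
Proof. intros; unfold gfun. apply lsum_words_prefix_small; auto. Qed.

Lemma gfun_big N : (16 <= N)%nat -> forall v k, (length v <= k)%nat ->
  gfun N v k <= Aof N v * (4/15) ^ (k - length v).
Proof. intros HN v k Hk. unfold gfun. set (m := (k - length v)%nat).
  replace k with (length v + m)%nat by (unfold m; lia).
  rewrite (lsum_words_prefix v (fun u => (/ INR N) ^ (length v + m) / omega_hat N u)).
  apply Rle_trans with (lsum (fun u => Aof N v * ((/ INR N) ^ m / om N (lastb None v) u)) (words m)).
  - apply Req_le. apply lsum_ext. intros u _. unfold Aof, omega_hat. rewrite om_app, pow_add.
    pose proof (om_pos N HN v None). pose proof (om_pos N HN u (lastb None v)). field. lra.
  - rewrite lsum_scal. apply Rmult_le_compat_l.
    + unfold Aof. apply div_nonneg. apply pow_le. destruct (q_facts N HN); lra. apply omega_pos; auto.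
    + apply inv_om_sum; auto. Qed.

Lemma geom_seq (g : nat -> R) (A r : R) (j : nat) : 0 <= A -> 0 <= r < 1 ->
  (forall k, (k < j)%nat -> g k = 0) -> (forall k, (j <= k)%nat -> g k <= A * r ^ (k - j)) ->
  forall n a, lsum g (seq a n) <= A / (1 - r) * r ^ (a - j).
Proof. intros HA Hr H0 H1. induction n; intros a.
  - unfold lsum; simpl. apply Rmult_le_pos. apply div_nonneg; lra. apply pow_le; lra.
  - simpl seq. rewrite lsum_cons. specialize (IHn (S a)).
    assert (0 <= A / (1 - r)) by (apply div_nonneg; lra).
    destruct (Nat.lt_ge_cases a j) as [Ha|Ha].
    + rewrite H0 by auto. replace (S a - j)%nat with 0%nat in IHn by lia.
      replace (a - j)%nat with 0%nat by lia. lra.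
    + specialize (H1 a Ha). replace (S a - j)%nat with (S (a - j)) in IHn by lia. simpl in IHn.
      assert (0 <= r ^ (a - j)) by (apply pow_le; lra).
      assert (A * r ^ (a - j) + A / (1 - r) * (r * r ^ (a - j)) = A / (1 - r) * r ^ (a - j)) by (field; lra).
      lra. Qed.

Lemma gsum_bound N : (16 <= N)%nat -> forall v K,
  lsum (gfun N v) (seq 0 (S K)) <= Aof N v * (15/11).
Proof. intros HN v K.
  assert (0 <= Aof N v) by (unfold Aof; apply div_nonneg; [apply pow_le; destruct (q_facts N HN); lra| apply omega_pos; auto]).
  pose proof (geom_seq (gfun N v) (Aof N v) (4/15) (length v) H ltac:(lra) (gfun_small N v) (gfun_big N HN v) (S K) 0).
  simpl in H0. replace (Aof N v / (1 - 4/15) * 1) with (Aof N v * (15/11)) in H0 by field. auto. Qed.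

Lemma sweight_eq N w : sweight N w = (/ INR N) ^ (length w) * ((/ INR N) ^ (length w) / omega_hat N w).
Proof. unfold sweight. replace (2 * length w)%nat with (length w + length w)%nat by lia. rewrite pow_add. unfold Rdiv. ring. Qed.

Lemma gfun_nonneg N : (16 <= N)%nat -> forall v k u, 0 <= (/ INR N) ^ k / omega_hat N u * ind (prefix v u).
Proof. intros. apply Rmult_le_pos. apply div_nonneg. apply pow_le. destruct (q_facts N H); lra.
  apply omega_pos; auto. apply ind_01. Qed.

Lemma sigma_bound N : (16 <= N)%nat -> forall (Q J : interval) v x K,
  in_ival Q (center N v) ->
  (forall u, in_ival Q (center N u) -> (length v <= length u)%nat) ->
  in_E N x -> in_ival J x ->
  sigma_part N K (fun y => in_ival Q y /\ in_ival J y) <= (4 * len J * Aof N v * (15/11)).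
Proof. intros HN Q J v x K Hv Hmin HE HJ. unfold sigma_part.
  destruct (q_facts N HN) as [q0 q1].
  assert (HlJ : 0 <= len J) by (unfold len; pose proof (in_ival_le J x HJ); lra).
  apply Rle_trans with (lsum (fun k => 4 * len J * gfun N v k) (seq 0 (S K))).
  - apply lsum_le. intros k _. unfold gfun. rewrite <- lsum_scal. apply lsum_le.
    intros w Hw. apply words_length in Hw. subst k.
    destruct (ind_cases (in_ival Q (center N w) /\ in_ival J (center N w))) as [[[HQ HJ'] E]|[_ E]]; rewrite E.
    + rewrite (ind_true (prefix v w)) by (apply (uniq_center N HN Q); auto).
      rewrite sweight_eq. set (q := / INR N) in *.
      assert (q ^ length w <= 4 * len J).
      { pose proof (dist_E_center N HN x w HE). pose proof (in_ival_le J x HJ). pose proof (in_ival_le J _ HJ').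
        unfold len. fold q in H. lra. }
      assert (0 <= q ^ length w / omega_hat N w) by (apply div_nonneg; [apply pow_le; lra| apply omega_pos; auto]).
      nra.
    + rewrite Rmult_0_r. apply Rmult_le_pos; [lra|]. apply gfun_nonneg; auto.
  - rewrite lsum_scal. pose proof (gsum_bound N HN v K). nra. Qed.

Lemma dist_int_bound z J x : in_ival J x -> 0 <= dist_int z J /\ Rabs (z - x) <= len J + dist_int z J.
Proof. intros H. apply in_ival_le in H. unfold dist_int, len.
  destruct (Rlt_dec z (lo J)); [|destruct (Rlt_dec (hi J) z)]; split; try lra;
  unfold Rabs; destruct (Rcase_abs (z - x)); lra. Qed.

Lemma D_bound N : (16 <= N)%nat -> forall J x w, in_E N x -> in_ival J x ->
  (/ INR N) ^ (length w) / 4 <= len J + dist_int (center N w) J.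
Proof. intros HN J x w HE HJ. destruct (dist_int_bound (center N w) J x HJ).
  pose proof (dist_E_center N HN x w HE).
  revert H0; unfold Rabs; destruct (Rcase_abs (center N w - x)); intros; lra. Qed.

Lemma poisson_bound N : (16 <= N)%nat -> forall (I0 J : interval) v x K,
  in_ival I0 (center N v) ->
  (forall u, in_ival I0 (center N u) -> (length v <= length u)%nat) ->
  in_E N x -> in_ival J x ->
  0 <= poisson_part N K J I0 <= 4 * Aof N v * (15/11).
Proof. intros HN I0 J v x K Hv Hmin HE HJ. unfold poisson_part.
  destruct (q_facts N HN) as [q0 q1].
  assert (HlJ : 0 <= len J) by (unfold len; pose proof (in_ival_le J x HJ); lra).
  assert (HD : forall w, 0 < len J + dist_int (center N w) J).
  { intros w. pose proof (D_bound N HN J x w HE HJ). assert (0 < (/ INR N) ^ length w) by (apply pow_lt; lra). lra. }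
  split.
  - apply lsum_nonneg; intros k _; apply lsum_nonneg; intros w _.
    apply Rmult_le_pos; [apply Rmult_le_pos|].
    + unfold sweight. apply div_nonneg; [apply pow_le; lra| apply omega_pos; auto].
    + apply ind_01.
    + apply div_nonneg; auto. specialize (HD w). nra.
  - apply Rle_trans with (lsum (fun k => 4 * gfun N v k) (seq 0 (S K))).
    + apply lsum_le. intros k _. unfold gfun. rewrite <- lsum_scal. apply lsum_le.
      intros w Hw. apply words_length in Hw. subst k.
      destruct (ind_cases (in_ival I0 (center N w))) as [[HQ E]|[_ E]]; rewrite E.
      * rewrite (ind_true (prefix v w)) by (apply (uniq_center N HN I0); auto).
        rewrite sweight_eq. set (q := / INR N) in *.
        pose proof (D_bound N HN J x w HE HJ) as HDw. fold q in HDw. specialize (HD w).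
        set (D := len J + dist_int (center N w) J) in *.
        assert (0 < q ^ length w) by (apply pow_lt; lra).
        assert (len J / D ^ 2 <= 4 / q ^ length w).
        { apply Rle_trans with (/ D). 
          - unfold Rdiv. replace (/ D) with (D * / D ^ 2) by (field; lra).
            apply Rmult_le_compat_r. left; apply Rinv_0_lt_compat; nra. unfold D. 
            pose proof (dist_int_bound (center N w) J x HJ). lra.
          - replace (4 / q ^ length w) with (/ (q ^ length w / 4)) by (field; lra).
            apply Rinv_le_contravar; lra. }
        assert (0 <= q ^ length w / omega_hat N w) by (apply div_nonneg; [lra| apply omega_pos; auto]).
        rewrite Rmult_1_r.
        apply Rle_trans with (q ^ length w * (q ^ length w / omega_hat N w) * (4 / q ^ length w)).
        { apply Rmult_le_compat_l; auto. nra. }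
        assert (omega_hat N w <> 0) by (pose proof (omega_pos N HN w); lra). assert (q ^ length w <> 0) by lra. apply Req_le. field; repeat split; auto.
      * rewrite Rmult_0_r, Rmult_0_l. apply Rmult_le_pos; [lra|]. apply gfun_nonneg; auto.
    + rewrite lsum_scal. pose proof (gsum_bound N HN v K). nra. Qed.

Lemma min_exists (P : nat -> Prop) : (exists n, P n) -> exists n, P n /\ forall m, P m -> (n <= m)%nat.
Proof. intros [n Hn]. apply NNPP; intro Hno.
  assert (forall n m, (m <= n)%nat -> ~ P m).
  { induction n0; intros m Hm HP.
    - apply Hno. exists m. split; auto. intros; lia.
    - apply Hno. exists m. split; auto. intros m' Hm'. apply NNPP; intro. apply (IHn0 m'); auto; lia. }
  apply (H n n); auto. Qed.

Lemma min_center N (Q : interval) : (exists u, in_ival Q (center N u)) ->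
  exists v, in_ival Q (center N v) /\ forall u, in_ival Q (center N u) -> (length v <= length u)%nat.
Proof. intros [u Hu].
  destruct (min_exists (fun j => exists u, length u = j /\ in_ival Q (center N u))) as [j [[v [Hl Hv]] Hm]].
  { exists (length u), u; auto. }
  exists v. split; auto. intros u' Hu'. rewrite Hl. apply Hm. exists u'; auto. Qed.

Lemma at_most_one (g : nat -> R) l : NoDup l -> (forall r, In r l -> 0 <= g r <= 1) ->
  (forall r r', In r l -> In r' l -> r <> r' -> 0 < g r -> 0 < g r' -> False) -> lsum g l <= 1.
Proof. induction l as [|a l IH]; intros Hnd H01 Hu.
  - unfold lsum; simpl; lra.
  - rewrite lsum_cons. inversion Hnd; subst.
    destruct (Rle_lt_dec (g a) 0) as [Ha|Ha].
    + assert (lsum g l <= 1) by (apply IH; auto; intros; [apply H01; simpl; auto| eapply (Hu r r'); simpl; eauto]).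
      lra.
    + assert (lsum g l <= 0).
      { apply lsum_nonpos. intros r Hr. apply Rnot_lt_le. intro Hg. apply (Hu a r); simpl; auto.
        intro; subst; contradiction. }
      pose proof (H01 a (or_introl eq_refl)). lra. Qed.

Lemma sweight_nonneg N : (16 <= N)%nat -> forall w, 0 <= sweight N w.
Proof. intros HN w. unfold sweight. apply div_nonneg. apply pow_le. destruct (q_facts N HN); lra. apply omega_pos; auto. Qed.

Lemma S_nonneg N (A : R -> Prop) S : (16 <= N)%nat -> sigma_le N A S -> 0 <= S.
Proof. intros HN H. specialize (H 0%nat). eapply Rle_trans; [|apply H]. unfold sigma_part.
  apply lsum_nonneg; intros; apply lsum_nonneg; intros. apply Rmult_le_pos; [|apply ind_01].
  apply sweight_nonneg; auto. Qed.

Lemma sweight_le_S N (A : R -> Prop) S v : (16 <= N)%nat -> sigma_le N A S -> A (center N v) -> sweight N v <= S.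
Proof. intros HN H Hv. specialize (H (length v)). eapply Rle_trans; [|apply H]. unfold sigma_part.
  eapply Rle_trans; [|apply (lsum_in_ge _ _ (length v))].
  - eapply Rle_trans; [|apply (lsum_in_ge _ _ v)].
    + cbv beta. rewrite ind_true; auto. lra.
    + apply words_complete.
    + intros; apply Rmult_le_pos; [apply sweight_nonneg; auto| apply ind_01].
  - apply in_seq. lia.
  - intros; apply lsum_nonneg; intros. apply Rmult_le_pos; [apply sweight_nonneg; auto| apply ind_01]. Qed.

Lemma final_const N v : (16 <= N)%nat ->
  (4 * Aof N v * (15/11)) ^ 2 * omega_hat N v <= 30 * sweight N v.
Proof. intros HN. rewrite sweight_eq. unfold Aof. pose proof (omega_pos N HN v).
  set (a := (/ INR N) ^ length v) in *. set (o := omega_hat N v) in *.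
  assert (0 <= a * (a / o)) by (apply Rmult_le_pos; [unfold a; apply pow_le; destruct (q_facts N HN); lra| apply div_nonneg; [unfold a; apply pow_le; destruct (q_facts N HN); lra| lra]]).
  replace ((4 * (a / o) * (15 / 11)) ^ 2 * o) with ((3600/121) * (a * (a / o))) by (field; lra).
  nra. Qed.

Lemma two_points N : (16 <= N)%nat -> forall (Q : interval) w,
  (forall x, in_cantor N w x -> in_E N x -> in_ival Q x) -> in_ival Q (center N w).
Proof. intros HN Q w H. destruct (q_facts N HN).
  set (x1 := cleft N (w ++ [false])). set (x2 := cleft N (w ++ [true])).
  assert (Hx1 : in_ival Q x1).
  { apply H. apply (nesting N HN w [false]). apply cleft_in; auto. apply in_E_cleft; auto. }
  assert (Hx2 : in_ival Q x2).
  { apply H. apply (nesting N HN w [true]). apply cleft_in; auto. apply in_E_cleft; auto. }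
  apply (in_ival_convex Q x1 x2); auto. unfold x1, x2. rewrite !cleft_child. unfold center, clen.
  simpl. assert (0 < (/ INR N) ^ length w) by (apply pow_lt; lra).
  assert (/ INR N * (/ INR N) ^ length w <= /16 * (/ INR N) ^ length w) by nra. lra. Qed.

Theorem mainTheorem10 :
  forall N : nat, (16 <= N)%nat ->
  exists C : R,
    (forall Q : interval, nondeg Q ->
       forall S : R, sigma_le N (in_ival Q) S ->
       forall (k : nat) (c : list bool -> R),
         (forall w, length w = k -> forall x, in_cantor N w x -> in_E N x ->
            below_max_sq N Q x (c w)) ->
         lsum (fun w => omega_hat N w * c w) (words k) <= C * S) /\
    (forall (I0 : interval) (Ir : nat -> option interval),
       nondeg I0 -> decomposition I0 Ir ->
       forall S : R, sigma_le N (in_ival I0) S ->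
       forall R0 k K : nat,
         lsum (fun r => packing_term N k K I0 (Ir r)) (seq 0 R0) <= C * S).
Proof.
  intros N HN. exists 30. split.
  - intros Q _ S HS k c Hc. pose proof (S_nonneg N _ S HN HS) as HS0.
    assert (Hcen : forall w, length w = k -> 0 < c w -> in_ival Q (center N w)).
    { intros w Hw Hpos. apply two_points; auto. intros x Hx HE.
      destruct (Hc w Hw x Hx HE) as [Hle|[HQ _]]; [lra|auto]. }
    destruct (classic (exists u, in_ival Q (center N u))) as [Hex|Hnex].
    + destruct (min_center N Q Hex) as [v [Hv Hmin]].
      set (B := 4 * Aof N v * (15/11)).
      apply Rle_trans with (lsum (fun w => B ^ 2 * (omega_hat N w * ind (prefix v w))) (words k)).
      * apply lsum_le. intros w Hw. apply words_length in Hw.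
        pose proof (omega_pos N HN w).
        assert (0 <= B ^ 2 * (omega_hat N w * ind (prefix v w))).
        { apply Rmult_le_pos. apply pow2_ge_0. apply Rmult_le_pos; [lra| apply ind_01]. }
        destruct (Rle_lt_dec (c w) 0) as [Hc0|Hc0]; [nra|].
        pose proof (Hcen w Hw Hc0) as HQw.
        rewrite ind_true by (apply (uniq_center N HN Q); auto).
        assert (c w <= B ^ 2).
        { apply Rnot_lt_le. intro Hbig.
          destruct (Hc w Hw (cleft N w) (cleft_in N HN w) (in_E_cleft N HN w)) as [Hle|[_ Hm]]; [lra|].
          assert (0 <= B).
          { unfold B, Aof. apply Rmult_le_pos; [|lra]. apply Rmult_le_pos; [lra|].
            apply div_nonneg; [apply pow_le; destruct (q_facts N HN); lra| apply omega_pos; auto]. }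
          destruct (Hm B H1 ltac:(simpl in Hbig; lra)) as [J [_ [HJ [K HK]]]].
          pose proof (sigma_bound N HN Q J v (cleft N w) K Hv Hmin (in_E_cleft N HN w) HJ).
          unfold B in HK. lra. }
        nra.
      * rewrite lsum_scal. pose proof (omega_prefix_sum N HN v k).
        pose proof (final_const N v HN). pose proof (sweight_le_S N _ S v HN HS Hv).
        fold B in H0. assert (0 <= B ^ 2) by apply pow2_ge_0. nra.
    + apply Rle_trans with 0; [|lra]. apply lsum_nonpos. intros w Hw. apply words_length in Hw.
      pose proof (omega_pos N HN w).
      destruct (Rle_lt_dec (c w) 0) as [Hc0|Hc0]; [nra|].
      exfalso. apply Hnex. exists w. auto.
  - intros I0 Ir _ [Hnd [Hcov Hdisj]] S HS R0 k K. pose proof (S_nonneg N _ S HN HS) as HS0.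
    destruct (classic (exists u, in_ival I0 (center N u))) as [Hex|Hnex].
    + destruct (min_center N I0 Hex) as [v [Hv Hmin]].
      set (B := 4 * Aof N v * (15/11)).
      set (indr := fun r w => match Ir r with Some J => ind (forall x, in_cantor N w x -> in_ival J x) | None => 0 end).
      assert (Hind : forall r w, 0 <= indr r w <= 1).
      { intros r w. unfold indr. destruct (Ir r); [apply ind_01| lra]. }
      apply Rle_trans with (lsum (fun r => B ^ 2 * lsum (fun w => omega_hat N w * indr r w) (words k)) (seq 0 R0)).
      * apply lsum_le. intros r _. unfold indr, packing_term. destruct (Ir r) as [J|] eqn:EJ.
        -- fold (omega_low N k J).
           assert (Hol : 0 <= omega_low N k J).
           { apply lsum_nonneg. intros w _. apply Rmult_le_pos; [left; apply omega_pos; auto| apply ind_01]. }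
           destruct (Req_dec (omega_low N k J) 0) as [E0|Ene].
           { rewrite E0. rewrite Rmult_0_l. apply Rmult_le_pos; [apply pow2_ge_0| lra]. }
           destruct (lsum_pos_exists _ _ (ltac:(lra) : 0 < omega_low N k J)) as [w [Hw Hpos]].
           destruct (ind_cases (forall x, in_cantor N w x -> in_ival J x)) as [[Hsub _]|[_ E]];
             [| rewrite E in Hpos; lra].
           destruct (poisson_bound N HN I0 J v (cleft N w) K Hv Hmin (in_E_cleft N HN w) (Hsub _ (cleft_in N HN w))) as [P0 P1].
           fold B in P1. rewrite Rmult_comm. apply Rmult_le_compat_r; auto.
           simpl. rewrite !Rmult_1_r. apply Rmult_le_compat; auto.
        -- apply Rmult_le_pos; [apply pow2_ge_0|]. apply lsum_nonneg; intros; lra.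
      * rewrite lsum_scal. rewrite lsum_swap.
        apply Rle_trans with (B ^ 2 * lsum (fun w => omega_hat N w * ind (prefix v w)) (words k)).
        -- apply Rmult_le_compat_l; [apply pow2_ge_0|]. apply lsum_le. intros w _.
           rewrite lsum_scal. apply Rmult_le_compat_l; [left; apply omega_pos; auto|].
           destruct (classic (exists r, In r (seq 0 R0) /\ 0 < indr r w)) as [[r [Hr Hp]]|Hno].
           ++ unfold indr in Hp. destruct (Ir r) as [J|] eqn:EJ; [|lra].
              destruct (ind_cases (forall x, in_cantor N w x -> in_ival J x)) as [[Hsub _]|[_ E]];
                [| rewrite E in Hp; lra].
              rewrite ind_true.
              ** apply at_most_one. apply seq_NoDup. intros; apply Hind.
                 intros r1 r2 _ _ Hne P1 P2. unfold indr in P1, P2.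
                 destruct (Ir r1) as [J1|] eqn:E1; [|lra]. destruct (Ir r2) as [J2|] eqn:E2; [|lra].
                 destruct (ind_cases (forall x, in_cantor N w x -> in_ival J1 x)) as [[S1 _]|[_ E]]; [| rewrite E in P1; lra].
                 destruct (ind_cases (forall x, in_cantor N w x -> in_ival J2 x)) as [[S2 _]|[_ E]]; [| rewrite E in P2; lra].
                 apply (Hdisj r1 r2 J1 J2 Hne E1 E2 (cleft N w)); [apply S1| apply S2]; apply cleft_in; auto.
              ** apply (uniq_center N HN I0); auto. apply Hcov. exists r, J. split; auto.
                 apply Hsub. apply center_in; auto.
           ++ apply Rle_trans with 0; [| apply ind_01]. apply lsum_nonpos. intros r Hr.
              apply Rnot_lt_le. intro; apply Hno; eauto.
        -- pose proof (omega_prefix_sum N HN v k). pose proof (final_const N v HN).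
           pose proof (sweight_le_S N _ S v HN HS Hv). fold B in H0. assert (0 <= B ^ 2) by apply pow2_ge_0. nra.
    + apply Rle_trans with 0; [|lra]. apply lsum_nonpos. intros r _. unfold packing_term.
      destruct (Ir r) as [J|]; [|lra].
      assert (poisson_part N K J I0 = 0).
      { unfold poisson_part. transitivity (lsum (fun _ : nat => 0) (seq 0 (Datatypes.S K))); [|apply lsum_zero].
        apply lsum_ext. intros k' _. transitivity (lsum (fun _ : list bool => 0) (words k')); [|apply lsum_zero].
        apply lsum_ext. intros w _. rewrite ind_false; [ring|]. intro; apply Hnex; eauto. }
      rewrite H. simpl. lra.
Qed.
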